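(* Let $k\ge r\ge3$ and $m,m'\ge 0$ be integers, and let $\pi\in\mathbb{C}_{=}(k,r|m)$. Then $\pi\in\mathbb{C}_{<}(k,r|m')$ if and only if $m<m'$.
   Context: A partition $\pi=(\pi_1,\dots,\pi_\ell)$ is a finite non-increasing sequence of positive integers; ''$a$ occurs in $\pi$'' means $a=\pi_i$ for some $i$. Göllnitz–Gordon marking: $GG(\pi)$ assigns a positive integer (mark) to each part, processing the parts from smallest to largest; $\pi_i$ receives the smallest positive integer different from the marks of all parts $\pi_g$ with $g>i$ and $\pi_i-\pi_g\le 2$, where $\pi_i-\pi_g<2$ is required when $\pi_i$ is odd. An ''$r$-marked part $a$'' is a part equal to $a$ with mark $r$. $N_i(\pi)$ is the number of parts with mark $i$; $\pi^{(i)}_1\ge\dots\ge\pi^{(i)}_{N_i(\pi)}$ are the parts with mark $i$, with $\pi^{(i)}_0=+\infty$, $\pi^{(i)}_{N_i(\pi)+1}=-\infty$. $\mathbb{C}(k,r)$: partitions with (i) no odd part repeated; (ii) $\pi_i\ge\pi_{i+k-1}+2$ for $1\le i\le\ell-k+1$, strict if $\pi_i$ even; (iii) at most $r-1$ parts $\le 2$. Starting types: for $\pi\in\mathbb{C}(k,r)$ with $N_2=N_2(\pi)\ge1$, let $l$ be the largest integer in $\{0,\dots,N_2\}$ such that no odd part of $\pi$ is $\ge\pi^{(2)}_l$; for $l<i\le N_2$, $\pi^{(2)}_i$ has type $s_{-1}$. For $b=1,\dots,l$ in increasing order, type and auxiliary $\sigma_b$: for $b=1$: Case 1: 1-marked part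 $\pi^{(2)}_1-1$ exists and $\pi^{(2)}_1+2$ does not occur: type $s_0$, $\sigma_1=\pi^{(2)}_1-1$; Case 2: 1-marked $\pi^{(2)}_1-2$ exists and $\pi^{(2)}_1+2$ does not occur: type $s_1$, $\sigma_1=\pi^{(2)}_1-2$; Case 3: 1-marked $\pi^{(2)}_1+2$ exists: type $s_2$, $\sigma_1=\pi^{(2)}_1+2$; Case 4: 1-marked $\pi^{(2)}_1$ exists: type $s_3$, $\sigma_1=\pi^{(2)}_1$. For $2\le b\le l$: Case 1: 1-marked $\pi^{(2)}_b-1$ exists and, if a 1-marked $\pi^{(2)}_b+2$ exists, $\sigma_{b-1}=\pi^{(2)}_b+2$: type $s_0$, $\sigma_b=\pi^{(2)}_b-1$; Case 2: same with $\pi^{(2)}_b-2$: type $s_1$, $\sigma_b=\pi^{(2)}_b-2$; Case 3: 1-marked $\pi^{(2)}_b+2$ exists and $\sigma_{b-1}\ne\pi^{(2)}_b+2$: type $s_2$, $\sigma_b=\pi^{(2)}_b+2$; Case 4: 1-marked $\pi^{(2)}_b$ exists: type $s_3$, $\sigma_b=\pi^{(2)}_b$. $\mathbb{C}_{<}(k,r|p,t)$ (for $p,t\ge0$): the set of $\pi\in\mathbb{C}(k,r)$ such that (1) no odd part is $\ge 2t+1$; (2) $\pi^{(2)}_{p+1}<2t+1<\pi^{(2)}_p$ (in particular $p\le N_2(\pi)$); (3) if $\pi^{(2)}_p=2t+2$ then it is of starting type $s_2$ or $s_3$; (4) if $\pi^{(2)}_{p+1}=2t$ then it is of starting type $s_0$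 or $s_1$. $\mathbb{C}_{=}(k,r|p,t)$ (for $p,t\ge0$): the set of $\pi\in\mathbb{C}(k,r)$ such that (1) the largest odd part is $2t+1$; (2) the mark of $2t+1$ in $GG(\pi)$ is at most $2$; (3) $\pi^{(2)}_p\ge 2t+2$ and $\pi^{(2)}_{p+1}\le 2t+2$; (4) if there is a 2-marked part $2t+2$ of starting type $s_0$, then $\pi^{(2)}_{p+1}=2t+2$ and there exists $1\le i\le p+1$ with $\pi^{(2)}_i=\pi^{(2)}_{p+1}+4(p-i+1)$ and $\pi^{(2)}_i$ occurring exactly once in $\pi$; (5) if there is a 2-marked part $2t+2$ of starting type $s_2$, then $\pi^{(2)}_p=2t+2$; (6) if $2t+2$ occurs in $\pi$ and there is no 2-marked part $2t+2$, then $\pi^{(2)}_p=2t+4$, it is of starting type $s_3$, and there exists $1\le i\le p$ with $\pi^{(2)}_i=\pi^{(2)}_p+4(p-i)$ such that $\pi^{(2)}_i+2$ does not occur in $\pi$. For $m\ge0$: $\mathbb{C}_{<}(k,r|m)=\bigcup_{p+t=m}\mathbb{C}_{<}(k,r|p,t)$ and $\mathbb{C}_{=}(k,r|m)=\bigcup_{p+t=m}\mathbb{C}_{=}(k,r|p,t)$, unions over integers $p,t\ge0$. *)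

(* Defs.v *)
(* Partitions are non-increasing seq nat with
   positive parts; list position 0 corresponds to pi_1. *)
From mathcomp Require Import all_boot.
Set Implicit Arguments. Unset Strict Implicit. Unset Printing Implicit Defensive.

Definition is_partition (s : seq nat) : bool :=
  sorted geq s && all (fun x => 0 < x) s.

Definition mex1 (l : seq nat) : nat :=
  head 0 [seq j <- iota 1 (size l).+1 | j \notin l].

(* GG-condition: part y (with larger index) is within reach of part x *)
Definition gg_near (x y : nat) : bool :=
  if odd x then x - y < 2 else x - y <= 2.

(* Goellnitz-Gordon marking: gg s is the list of marks, aligned with s.
   Marks are assigned from the smallest (last) part to the largest. *)
Fixpoint gg (s : seq nat) : seq nat :=
  match s with
  | [::] => [::]
  | x :: s' =>
      let ms := gg s' in
      mex1 [seq pm.2 | pm <- zip s' ms & gg_near x pm.1] :: ms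
  end.

Definition marked_parts (i : nat) (s : seq nat) : seq nat :=
  [seq pm.1 | pm <- zip s (gg s) & pm.2 == i].

Definition N_ (i : nat) (s : seq nat) : nat := size (marked_parts i s).

(* extended naturals for pi^(i)_0 = +oo and pi^(i)_{N_i+1} = -oo *)
Inductive ext := MInf | Fin of nat | PInf.

Definition ext_lt (a b : ext) : bool :=
  match a, b with
  | MInf, MInf => false
  | MInf, _ => true
  | Fin x, Fin y => x < y
  | Fin _, PInf => true
  | Fin _, MInf => false
  | PInf, _ => false
  end.

Definition ext_le (a b : ext) : bool :=
  match a, b with
  | MInf, _ => true
  | Fin x, Fin y => x <= y
  | Fin _, PInf => true
  | Fin _, MInf => false
  | PInf, PInf => true
  | PInf, _ => false
  end.

Definition ext_eqn (a : ext) (n : nat) : bool :=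
  if a is Fin x then x == n else false.

(* pi^(i)_j (1-based j); indices beyond N_i + 1 are never used meaningfully
   (the statements below require p <= N_2 explicitly) and are set to -oo. *)
Definition mp (i : nat) (s : seq nat) (j : nat) : ext :=
  if j == 0 then PInf
  else if j <= N_ i s then Fin (nth 0 (marked_parts i s) j.-1)
  else MInf.

(* the finite value of pi^(2)_b for 1 <= b <= N_2 *)
Definition p2 (s : seq nat) (b : nat) : nat := nth 0 (marked_parts 2 s) b.-1.

Definition occurs (s : seq nat) (a : nat) : bool := a \in s.

Definition one_marked (s : seq nat) (a : nat) : bool :=
  has (fun pm => (pm.1 == a) && (pm.2 == 1)) (zip s (gg s)).

(* the starting types; Snone = no case applies *)
Inductive stype := Sm1 | S0 | S1 | S2 | S3 | Snone.

Definition stype_eqb (a b : stype) : bool :=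
  match a, b with
  | Sm1, Sm1 | S0, S0 | S1, S1 | S2, S2 | S3, S3 | Snone, Snone => true
  | _, _ => false
  end.

Definition no_odd_ge (s : seq nat) (j : nat) : bool :=
  all (fun x => ~~ odd x || ext_lt (Fin x) (mp 2 s j)) s.

Definition lmax (s : seq nat) : nat :=
  last 0 [seq j <- iota 0 (N_ 2 s).+1 | no_odd_ge s j].

(* existence of a 1-marked part a with a + d = v (avoids truncated minus) *)
Definition one_marked_minus (s : seq nat) (v d : nat) : bool :=
  has (fun pm => (pm.1 + d == v) && (pm.2 == 1)) (zip s (gg s)).

(* starting type and sigma of the 2-marked part with index b = n+1, for b <= l.
   Cases are tried in the order 1,2,3,4 (first applicable case). *)
Fixpoint st_rec (s : seq nat) (n : nat) : stype * nat :=
  match n with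
  | 0 =>
      let v := p2 s 1 in
      if one_marked_minus s v 1 && ~~ occurs s (v + 2) then (S0, v - 1)
      else if one_marked_minus s v 2 && ~~ occurs s (v + 2) then (S1, v - 2)
      else if one_marked s (v + 2) then (S2, v + 2)
      else if one_marked s v then (S3, v)
      else (Snone, 0)
  | n'.+1 =>
      let v := p2 s n.+1 in
      let sig := (st_rec s n').2 in
      let cond_up := ~~ one_marked s (v + 2) || (sig == v + 2) in
      if one_marked_minus s v 1 && cond_up then (S0, v - 1)
      else if one_marked_minus s v 2 && cond_up then (S1, v - 2)
      else if one_marked s (v + 2) && (sig != v + 2) then (S2, v + 2)
      else if one_marked s v then (S3, v)
      else (Snone, 0)
  end.

Definition start_type (s : seq nat) (b : nat) : stype :=
  if lmax s < b then Sm1 else (st_rec s b.-1).1.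

Definition has_type (s : seq nat) (b : nat) (T : stype) : bool :=
  stype_eqb (start_type s b) T.

Definition inC (k r : nat) (s : seq nat) : Prop :=
  is_partition s /\
  (forall x, odd x -> count_mem x s <= 1) /\
  (forall i, i + k.-1 < size s ->
     if odd (nth 0 s i) then nth 0 s (i + k.-1) + 2 <= nth 0 s i
     else nth 0 s (i + k.-1) + 2 < nth 0 s i) /\
  count (fun x => x <= 2) s <= r.-1.

Definition inC_lt_pt (k r p t : nat) (s : seq nat) : Prop :=
  inC k r s /\
  (forall x, x \in s -> odd x -> x < 2 * t + 1) /\
  p <= N_ 2 s /\
  ext_lt (mp 2 s p.+1) (Fin (2 * t + 1)) /\ ext_lt (Fin (2 * t + 1)) (mp 2 s p) /\
  (ext_eqn (mp 2 s p) (2 * t + 2) -> has_type s p S2 || has_type s p S3) /\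
  (ext_eqn (mp 2 s p.+1) (2 * t) -> has_type s p.+1 S0 || has_type s p.+1 S1).

Definition is_2marked_of_type (s : seq nat) (a : nat) (T : stype) : Prop :=
  exists b, [/\ 1 <= b, b <= N_ 2 s, p2 s b = a & has_type s b T].

Definition inC_eq_pt (k r p t : nat) (s : seq nat) : Prop :=
  inC k r s /\
  ((2 * t + 1) \in s /\ (forall x, x \in s -> odd x -> x <= 2 * t + 1)) /\
  (forall pm, pm \in zip s (gg s) -> pm.1 = 2 * t + 1 -> pm.2 <= 2) /\
  p <= N_ 2 s /\
  ext_le (Fin (2 * t + 2)) (mp 2 s p) /\ ext_le (mp 2 s p.+1) (Fin (2 * t + 2)) /\
  (* (4) *)
  (is_2marked_of_type s (2 * t + 2) S0 ->
     ext_eqn (mp 2 s p.+1) (2 * t + 2) /\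
     exists i, [/\ 1 <= i, i <= p.+1,
                   p2 s i = p2 s p.+1 + 4 * (p.+1 - i) & count_mem (p2 s i) s = 1]) /\
  (is_2marked_of_type s (2 * t + 2) S2 -> ext_eqn (mp 2 s p) (2 * t + 2)) /\
  (* (6) *)
  ((2 * t + 2) \in s -> ~ (2 * t + 2) \in marked_parts 2 s ->
     [/\ ext_eqn (mp 2 s p) (2 * t + 4), has_type s p S3 &
         exists i, [/\ 1 <= i, i <= p,
                       p2 s i = p2 s p + 4 * (p - i) & (p2 s i + 2) \notin s]]).

Definition inC_lt (k r m : nat) (s : seq nat) : Prop :=
  exists p t, p + t = m /\ inC_lt_pt k r p t s.

Definition inC_eq (k r m : nat) (s : seq nat) : Prop :=
  exists p t, p + t = m /\ inC_eq_pt k r p t s.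

(* Main.v *)
Require Import Defs.
From mathcomp Require Import all_boot zify.
Set Implicit Arguments. Unset Strict Implicit. Unset Printing Implicit Defensive.

Lemma head_filter_iota (P : pred nat) a n c :
  a <= c -> c < head 0 [seq j <- iota a n | P j] -> ~~ P c.
Proof.
elim: n a => [|n IH] a /=; first by move=> _; rewrite ltn0.
case Pa: (P a) => /=; first by move=> ac ca; exfalso; lia.
move=> ac ch; case: (eqVneq c a) => [->|ne]; first by rewrite Pa.
by apply: (IH a.+1) => //; lia.
Qed.

Lemma mex1_spec l :
  [/\ 0 < mex1 l, mex1 l \notin l & forall c, 0 < c < mex1 l -> c \in l].
Proof.
rewrite /mex1.
have: has (fun j => j \notin l) (iota 1 (size l).+1).
  apply/negPn/negP => /hasPn H.
  have: size (iota 1 (size l).+1) <= size l.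
    apply: uniq_leq_size; first exact: iota_uniq.
    by move=> x /H; rewrite negbK.
  by rewrite size_iota ltnn.
rewrite has_filter.
case E: [seq j <- iota 1 (size l).+1 | j \notin l] => [|h fl] //= _.
have : h \in [seq j <- iota 1 (size l).+1 | j \notin l] by rewrite E mem_head.
rewrite mem_filter mem_iota => /andP [hn /andP [h1 h2]].
split=> // c /andP [c0 ch].
have := @head_filter_iota (fun j => j \notin l) 1 (size l).+1 c c0.
by rewrite E /= => /(_ ch); rewrite negbK.
Qed.

Lemma size_gg s : size (gg s) = size s.
Proof. by elim: s => //= x s ->. Qed.

Lemma gg_spec s i : i < size s ->
  [/\ 0 < nth 0 (gg s) i,
      (forall j, i < j < size s -> gg_near (nth 0 s i) (nth 0 s j) ->
         nth 0 (gg s) j != nth 0 (gg s) i) &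
      (nth 0 (gg s) i != 1 -> exists j, [/\ i < j < size s,
          gg_near (nth 0 s i) (nth 0 s j) & nth 0 (gg s) j = 1])].
Proof.
elim: s i => [|x s IH] [|i] //=.
- move=> _; set L := [seq _ | _ <- _ & _].
  have [H0 H1 H2] := mex1_spec L.
  split=> //.
  + move=> [|j] //= js nr; apply/negP=> /eqP E; move: H1; rewrite -E.
    apply/negP; rewrite negbK; apply/mapP; exists (nth 0 s j, nth 0 (gg s) j) => //.
    rewrite mem_filter /= nr /=.
    have <- := (nth_zip 0 0 j (esym (size_gg s))).
    by apply: mem_nth; rewrite size_zip size_gg minnn.
  + move=> ne; have: 1 \in L by apply: H2; lia.
    case/mapP=> pm; rewrite mem_filter => /andP [nr]/(nthP (0,0)) [j].
    rewrite size_zip size_gg minnn => js; rewrite nth_zip ?size_gg // => E e1.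
    exists j.+1; split=> //=.
    - by rewrite -E in nr.
    - by rewrite e1 -E.
- rewrite ltnS => /IH [H0 H1 H2]; split=> //.
  + by move=> [|j] //= /andP [ij js] nr; apply: H1 => //; rewrite ltnS in ij; rewrite ij.
  + by move=> /H2 [j [/andP [ij js] nr e]]; exists j.+1; split=> //=; rewrite ltnS ij.
Qed.

Lemma nth_zip_gg s i : nth (0,0) (zip s (gg s)) i = (nth 0 s i, nth 0 (gg s) i).
Proof. by rewrite nth_zip ?size_gg. Qed.

Lemma size_zip_gg s : size (zip s (gg s)) = size s.
Proof. by rewrite size_zip size_gg minnn. Qed.

Lemma mp_mem c s y : y \in marked_parts c s ->
  exists2 i, i < size s & (nth 0 s i = y /\ nth 0 (gg s) i = c).
Proof.
case/mapP=> pm; rewrite mem_filter => /andP [/eqP pc] /(nthP (0,0)) [i].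
rewrite size_zip_gg nth_zip_gg => hi E ->; exists i => //; by case: pm E pc => a b [-> ->] /= ->.
Qed.

Lemma one_markedP s a : one_marked s a <->
  exists2 i, i < size s & (nth 0 s i = a /\ nth 0 (gg s) i = 1).
Proof.
split.
- case/(has_nthP (0,0)) => i; rewrite size_zip_gg nth_zip_gg /= => hi /andP [/eqP h1 /eqP h2].
  by exists i.
- case=> i hi [h1 h2]; apply/(has_nthP (0,0)); exists i; rewrite ?size_zip_gg //.
  by rewrite nth_zip_gg /= h1 h2 !eqxx.
Qed.

Lemma ommP s v d : one_marked_minus s v d <->
  exists2 i, i < size s & (nth 0 s i + d = v /\ nth 0 (gg s) i = 1).
Proof.
split.
- case/(has_nthP (0,0)) => i; rewrite size_zip_gg nth_zip_gg /= => hi /andP [/eqP h1 /eqP h2].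
  by exists i.
- case=> i hi [h1 h2]; apply/(has_nthP (0,0)); exists i; rewrite ?size_zip_gg //.
  by rewrite nth_zip_gg /= h1 h2 !eqxx.
Qed.

Definition Rm (x y : nat) : bool := (y <= x) && ~~ gg_near x y.

Lemma mp_cons c x s : marked_parts c (x :: s) =
  if mex1 [seq pm.2 | pm <- zip s (gg s) & gg_near x pm.1] == c
  then x :: marked_parts c s else marked_parts c s.
Proof. by rewrite /marked_parts /=; case: ifP. Qed.

Lemma mp_sorted c s : sorted geq s -> sorted Rm (marked_parts c s).
Proof.
elim: s => [|x s IH] //= Hs.
have Hs' : sorted geq s by move: Hs; case: s {IH} => //= y s /andP [].
have Hx : all (geq x) s by apply: order_path_min Hs => a b d h1 h2; exact: leq_trans h2 h1.
rewrite mp_cons.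
set L := [seq pm.2 | pm <- zip s (gg s) & gg_near x pm.1].
case: ifP => hc; last exact: IH.
move: (IH Hs') => /=.
have Hm : forall y, y \in marked_parts c s -> Rm x y.
  move=> y; case/mp_mem=> j js [yj gj]; rewrite /Rm.
  apply/andP; split.
  - by move/allP: Hx => /(_ y); rewrite -yj mem_nth // => /(_ isT).
  - apply/negP=> nr.
    have [_ H1 _] := mex1_spec L; move/eqP: hc => hc; move: H1; rewrite hc => /negP; apply.
    apply/mapP; exists (nth 0 s j, nth 0 (gg s) j); last by rewrite gj.
    rewrite mem_filter /= yj nr /= -yj -(nth_zip_gg s j); apply: mem_nth; by rewrite size_zip_gg.
case: (marked_parts c s) Hm => [|y rest] //= Hm ->; rewrite andbT; apply: Hm; exact: mem_head.
Qed.

Section A.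
Variable s : seq nat.
Hypothesis Hs : sorted geq s.
Notation A := (marked_parts 2 s).

Lemma Astep j : j.+1 < size A ->
  nth 0 A j.+1 + 2 <= nth 0 A j /\ (~~ odd (nth 0 A j) -> nth 0 A j.+1 + 3 <= nth 0 A j).
Proof.
have := mp_sorted 2 Hs.
case: A => [|a A'] //= /(pathP 0) H js.
have := H j js; rewrite /Rm /gg_near.
set x := nth 0 (a :: A') j; set y := nth 0 A' j.
case: (odd x) => /andP [yx nn]; split=> //; lia.
Qed.

Lemma Adec i j : i < j -> j < size A -> nth 0 A j + 2 <= nth 0 A i.
Proof.
elim: j => [|j IH] //; rewrite ltnS leq_eqVlt => /orP [/eqP ->|ij] js.
- by case: (Astep js).
- have := IH ij (ltnW js); case: (Astep js) => h _; lia.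
Qed.

Lemma Ainj i j : i < size A -> j < size A -> nth 0 A i = nth 0 A j -> i = j.
Proof.
move=> hi js e; case: (ltngtP i j) => // h.
- have := Adec h js; lia.
- have := Adec h hi; lia.
Qed.

Lemma Ale i j : i <= j -> j < size A -> nth 0 A j <= nth 0 A i.
Proof.
rewrite leq_eqVlt => /orP [/eqP ->|ij] js //.
have := Adec ij js; lia.
Qed.

Lemma even_step x y : ~~ odd x -> ~~ odd y -> y + 3 <= x -> y + 4 <= x.
Proof.
move=> ox oy h; case: (eqVneq x (y + 3)) => [e|ne]; last lia.
by move: ox; rewrite e oddD /= (negbTE oy).
Qed.

Lemma Aspace i j : i <= j -> j < size A ->
  (forall k, i <= k <= j -> ~~ odd (nth 0 A k)) ->
  nth 0 A j + 4 * (j - i) <= nth 0 A i.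
Proof.
elim: j => [|j IH]; first by rewrite leqn0 => /eqP -> //=; lia.
rewrite leq_eqVlt => /orP [/eqP ->|ij] js Ho; first by rewrite subnn; lia.
have h1 := IH ij (ltnW js) (fun k hk => Ho k (ltac:(lia))).
case: (Astep js) => _ /(_ (Ho j ltac:(lia))) h2.
have h3 := even_step (Ho j ltac:(lia)) (Ho j.+1 ltac:(lia)) h2.
lia.
Qed.

End A.

Lemma st_spec s n :
  let v := p2 s n.+1 in
  [/\ (st_rec s n).1 = S0 -> one_marked_minus s v 1,
      (st_rec s n).1 = S1 -> one_marked_minus s v 2,
      (st_rec s n).1 = S3 -> one_marked s v &
      one_marked s v || one_marked_minus s v 1 || one_marked_minus s v 2 ->
      (n = 0 -> occurs s (v + 2) -> one_marked s v || one_marked s (v + 2)) ->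
      (st_rec s n).1 <> Snone].
Proof.
case: n => [|n] /=.
- set v := p2 s 1.
  case: (one_marked_minus s v 1); case: (one_marked_minus s v 2);
  case: (occurs s (v+2)); case: (one_marked s (v+2)); case: (one_marked s v) => //=;
  split=> // _ H; by move: (H erefl isT).
- set v := p2 s n.+2; set sg := (st_rec s n).2.
  case: (one_marked_minus s v 1); case: (one_marked_minus s v 2);
  case: (one_marked s (v+2)); case: (sg == v + 2); case: (one_marked s v) => //=.
Qed.

Lemma last_max d l x : path leq d l -> x \in d :: l -> x <= last d l.
Proof.
elim: l d x => [|a l IH] d x /=; first by rewrite mem_seq1 => _ /eqP ->.
case/andP=> da pl; rewrite in_cons => /orP [/eqP ->|xl].
- exact: leq_trans da (IH a a pl (mem_head _ _)).
- exact: IH.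
Qed.

Lemma lmax_ge s b : b <= N_ 2 s -> no_odd_ge s b -> b <= lmax s.
Proof.
move=> bN nb; rewrite /lmax; apply: last_max.
- set fl := [seq j <- _ | _].
  have : sorted leq fl by apply: sorted_filter; [exact: leq_trans| exact: iota_sorted].
  by case: fl.
- by rewrite in_cons mem_filter nb mem_iota /= add0n ltnS bN orbT.
Qed.

Lemma pos_lt s i j : sorted geq s -> i < size s -> j < size s ->
  nth 0 s j < nth 0 s i -> i < j.
Proof.
move=> Hs hi hj lt; rewrite ltnNge; apply/negP=> ji.
have := @sorted_leq_nth _ geq (fun a b c h1 h2 => leq_trans h2 h1) (fun a => leqnn a) 0 s Hs j i.
rewrite !inE => /(_ hj hi ji) /=; lia.
Qed.

Lemma count2 s i j : i < j -> j < size s -> nth 0 s i = nth 0 s j ->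
  1 < count_mem (nth 0 s i) s.
Proof.
elim: s i j => [|a s IH] [|i] [|j] //=.
- rewrite ltnS => _ js ->; rewrite eqxx add1n ltnS -has_count.
- by apply/hasP; exists (nth 0 s j); [apply: mem_nth | by rewrite /= eqxx].
- move=> ij js e; rewrite ltnS in ij; rewrite ltnS in js; exact: leq_trans (IH _ _ ij js e) (leq_addl _ _).
Qed.

Lemma start_type_eq s b : b <= lmax s -> start_type s b = (st_rec s b.-1).1.
Proof. by rewrite /start_type ltnNge => ->. Qed.

Lemma odd2t1 t : odd (2 * t + 1).
Proof. by rewrite oddD oddM. Qed.
Lemma odd2t2 t : odd (2 * t + 2) = false.
Proof. by rewrite oddD oddM. Qed.
Lemma odd2t t : odd (2 * t) = false.
Proof. by rewrite oddM. Qed.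

Lemma st_not_m1 s n : (st_rec s n).1 <> Sm1.
Proof. by case: n => [|n] /=; repeat case: ifP. Qed.

Section S.
Variable s : seq nat.
Hypothesis Hs : sorted geq s.
Notation A := (marked_parts 2 s).

Lemma sle i j : i <= j -> j < size s -> nth 0 s j <= nth 0 s i.
Proof.
move=> ij js.
have := @sorted_leq_nth _ geq (fun a b c h1 h2 => leq_trans h2 h1) (fun a => leqnn a) 0 s Hs i j.
rewrite !inE => /(_ (leq_ltn_trans ij js) js ij) //.
Qed.

Lemma near_le x y : gg_near x y -> y <= x -> x <= y + 2.
Proof. rewrite /gg_near; case: (odd x) => h yx; lia. Qed.

Lemma A_pos j : j < size A -> exists2 i, i < size s & (nth 0 s i = nth 0 A j /\ nth 0 (gg s) i = 2).
Proof. move=> js; apply: mp_mem; exact: mem_nth. Qed.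

Lemma A_in j : j < size A -> nth 0 A j \in s.
Proof. by case/A_pos=> i hi [<- _]; apply: mem_nth. Qed.

Lemma mp_fin j : 0 < j -> j <= size A -> mp 2 s j = Fin (nth 0 A j.-1).
Proof. by rewrite /mp /N_ => /lt0n_neq0 /negbTE -> ->. Qed.

Lemma mp_big j : size A < j -> mp 2 s j = MInf.
Proof. rewrite /mp /N_ => h; case: j h => // j h; rewrite ifN; last by rewrite -ltnNge. done. Qed.

Lemma TY b : 0 < b -> b <= size A -> (forall x, x \in s -> odd x -> x < nth 0 A b.-1) ->
  start_type s b <> Snone /\ start_type s b <> Sm1 /\ start_type s b = (st_rec s b.-1).1.
Proof.
move=> b0 bN Hodd.
have lb : b <= lmax s.
  apply: lmax_ge => //; apply/allP=> x xs; rewrite mp_fin //=.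
  by case ox: (odd x) => //=; apply: Hodd.
rewrite start_type_eq //; split; last split => //; last exact: st_not_m1.
case: b b0 bN Hodd lb => // n _ bN Hodd _ /=.
have [_ _ _ H] := st_spec s n; apply: H.
- have [i hi [si gi]] := A_pos bN.
  have ve : ~~ odd (nth 0 A n).
    by apply/negP=> o; have := Hodd _ (A_in bN) o; rewrite ltnn.
  have [_ _ H3] := gg_spec hi.
  case: (H3 ltac:(by rewrite gi)) => j [/andP [ij js] nr gj].
  have sj := sle (ltnW ij) js.
  move: nr; rewrite /gg_near si (negbTE ve) => nr.
  rewrite si in sj.
  have : nth 0 s j = nth 0 A n \/ nth 0 s j + 1 = nth 0 A n \/ nth 0 s j + 2 = nth 0 A n by lia.
  case=> [e|[e|e]].
  + by apply/orP; left; apply/orP; left; apply/one_markedP; exists j.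
  + by apply/orP; left; apply/orP; right; apply/ommP; exists j.
  + by apply/orP; right; apply/ommP; exists j.
- move=> n0; rewrite /occurs => /(nthP 0) [i hi si].
  have ve : ~~ odd (nth 0 A n).
    by apply/negP=> o; have := Hodd _ (A_in bN) o; rewrite ltnn.
  case: (eqVneq (nth 0 (gg s) i) 1) => gi.
    by apply/orP; right; apply/one_markedP; exists i; rewrite /p2 /=.
  have [_ _ H3] := gg_spec hi.
  case: (H3 gi) => j [/andP [ij js] nr gj].
  have sj := sle (ltnW ij) js.
  rewrite si /p2 /= in nr sj.
  move: nr; rewrite /gg_near oddD (negbTE ve) /= => nr.
  have : nth 0 s j = nth 0 A n + 2 \/ nth 0 s j = nth 0 A n + 1 \/ nth 0 s j = nth 0 A n by lia.
  case=> [e|[e|e]].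
  + by apply/orP; right; apply/one_markedP; exists j.
  + have : odd (nth 0 s j) by rewrite e oddD (negbTE ve).
    move/(Hodd _ (mem_nth 0 js)) => h; exfalso; simpl in h; lia.
  + by apply/orP; left; apply/one_markedP; exists j.
Qed.

End S.

Section E.
Variables (s : seq nat) (p t : nat).
Hypothesis Hs : sorted geq s.
Hypothesis Hodd1 : forall x, odd x -> count_mem x s <= 1.
Hypothesis H1in : (2 * t + 1) \in s.
Hypothesis H1max : forall x, x \in s -> odd x -> x <= 2 * t + 1.
Hypothesis H2 : forall pm, pm \in zip s (gg s) -> pm.1 = 2 * t + 1 -> pm.2 <= 2.
Hypothesis H3a : p <= N_ 2 s.
Hypothesis H5 : is_2marked_of_type s (2 * t + 2) S2 -> ext_eqn (mp 2 s p) (2 * t + 2).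
Notation A := (marked_parts 2 s).

Lemma mark21 i : i < size s -> nth 0 s i = 2 * t + 1 -> 0 < nth 0 (gg s) i <= 2.
Proof.
move=> hi si; have [H0 _ _] := gg_spec hi; rewrite H0 /=.
apply: (H2 (pm := (nth 0 s i, nth 0 (gg s) i))) => //.
rewrite -nth_zip_gg; apply: mem_nth; by rewrite size_zip_gg.
Qed.

Lemma no1 : ~ one_marked s (2 * t + 2).
Proof.
case/one_markedP=> i hi [si gi].
case/(nthP 0): H1in => i1 hi1 si1.
have ii1 : i < i1 by apply: (pos_lt Hs hi hi1); rewrite si si1; lia.
have m1 := mark21 hi1 si1.
have [_ Hn _] := gg_spec hi.
have n1 : nth 0 (gg s) i1 != 1.
  by rewrite -gi; apply: Hn; [rewrite ii1 | rewrite si si1 /gg_near odd2t2; lia].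
have [_ _ H3] := gg_spec hi1.
case: (H3 n1) => j [/andP [i1j js] nr gj].
have sj := sle Hs (ltnW i1j) js.
move: nr; rewrite si1 /gg_near odd2t1 => nr; rewrite si1 in sj.
have : nth 0 s j = 2 * t + 1 \/ nth 0 s j = 2 * t by lia.
case=> e.
- have := count2 i1j js (etrans si1 (esym e)); rewrite si1.
  have := Hodd1 (odd2t1 t); lia.
- have : nth 0 (gg s) j != nth 0 (gg s) i.
    apply: Hn; first by rewrite js (ltn_trans ii1 i1j).
    by rewrite si e /gg_near odd2t2; lia.
  by rewrite gi gj.
Qed.

Lemma SL b : 0 < b -> b <= size A -> nth 0 A b.-1 = 2 * t + 2 -> b != p ->
  has_type s b S0 || has_type s b S1.
Proof.
move=> b0 bN e bp.
have [T1 [T2 T3]] := TY Hs b0 bN (fun x xs ox => ltac:(have := H1max xs ox; lia)).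
rewrite /has_type.
case E: (start_type s b) T1 T2 T3 => //= _ _ T3.
- exfalso.
  have h2 : is_2marked_of_type s (2 * t + 2) S2.
    by exists b; split=> //; rewrite /has_type E.
  move: (H5 h2); case: p H3a bp => [|q] //= qN bp; rewrite mp_fin //= => /eqP e2.
  move: bp; rewrite -(prednK b0) eqSS; apply/negP/negPn/eqP.
  apply: (Ainj Hs); [lia | exact: qN | by rewrite e e2].
- exfalso; apply: no1.
  have [_ _ H _] := st_spec s b.-1; rewrite (prednK b0) in H.
  by rewrite -e; apply: H; rewrite -T3.
Qed.


Hypothesis H3b : ext_le (Fin (2 * t + 2)) (mp 2 s p).
Hypothesis H3c : ext_le (mp 2 s p.+1) (Fin (2 * t + 2)).
Hypothesis H4 : is_2marked_of_type s (2 * t + 2) S0 ->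
     ext_eqn (mp 2 s p.+1) (2 * t + 2) /\
     exists i, [/\ 1 <= i, i <= p.+1,
                   p2 s i = p2 s p.+1 + 4 * (p.+1 - i) & count_mem (p2 s i) s = 1].

Ltac keep_arith T := match T with is_true (leq _ _) => idtac | is_true (_ && _) => idtac | is_true (~~ (_ == _)) => idtac | is_true (@eq_op _ _ _) => idtac | @eq _ _ _ => idtac end.
Ltac slia := repeat match goal with H : ?T |- _ => tryif keep_arith T then fail else clear H end; lia.

Lemma dir1 p' t' :
  (forall x, x \in s -> odd x -> x < 2 * t' + 1) ->
  p' <= N_ 2 s ->
  ext_lt (mp 2 s p'.+1) (Fin (2 * t' + 1)) ->
  (ext_eqn (mp 2 s p'.+1) (2 * t') -> has_type s p'.+1 S0 || has_type s p'.+1 S1) ->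
  p + t < p' + t'.
Proof.
move=> L1 L2a L2b L4.
have tt : t < t' by have := L1 _ H1in (odd2t1 t); slia.
case: (leqP p p') => pp'; first slia.
have p0 : 0 < p by slia.
have pN : p <= size A := H3a.
have e1 : 2 * t + 2 <= nth 0 A p.-1 by move: H3b; rewrite mp_fin.
have e2 : nth 0 A p' < 2 * t' + 1 by move: L2b; rewrite mp_fin //=; slia.
have Hev : forall k, p' <= k <= p.-1 -> ~~ odd (nth 0 A k).
  move=> k /andP [h1 h2]; apply/negP => ok.
  have := H1max (A_in (ltac:(slia) : k < size A)) ok.
  have := Ale Hs h2 (ltac:(slia) : p.-1 < size A); slia.
have sp := Aspace Hs (ltac:(slia) : p' <= p.-1) (ltac:(slia) : p.-1 < size A) Hev.
case: (ltnP p'.+1 p) => h; first slia.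
have ep : p = p'.+1 by slia.
case: (ltnP (t.+1) t') => ht; first slia.
have et : t' = t.+1 by slia.
have eA : nth 0 A p' = 2 * t + 2 by move: e1; rewrite ep /=; slia.
have := L4; rewrite mp_fin //=; last slia.
rewrite eA et eqn_leq; move/(_ ltac:(apply/andP; split; slia)) => /orP [T0|T1].
- have h0 : is_2marked_of_type s (2 * t + 2) S0.
    by exists p; split=> //; rewrite ep.
  case: (H4 h0) => + _.
  case: (leqP p.+1 (size A)) => hp.
  + rewrite mp_fin //= => /eqP e3.
    have := Adec Hs (ltac:(slia) : p' < p) hp; simpl in e3; rewrite e3 -eA; slia.
  + by rewrite mp_big.
- move: T1; rewrite /has_type /start_type; case: ifP => // _.
  case E: (st_rec s p') => [T sg] /=; case: T E => // E _.
  have [_ H _ _] := st_spec s p'; rewrite E /= in H.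
  case/ommP: (H erefl) => j hj [sj gj]; rewrite /p2 /= eA in sj.
  have [i2 hi2 [si2 gi2]] := A_pos (ltac:(slia) : p' < size A).
  rewrite eA in si2.
  case/(nthP 0): H1in => i1 hi1 si1.
  have m1 := mark21 hi1 si1.
  have i1j : i1 < j by apply: (pos_lt Hs hi1 hj); rewrite si1; slia.
  have i2i1 : i2 < i1 by apply: (pos_lt Hs hi2 hi1); rewrite si1 si2; slia.
  have [_ Hn1 _] := gg_spec hi1.
  have n1 : nth 0 (gg s) j != nth 0 (gg s) i1.
    by apply: Hn1; [rewrite i1j hj | rewrite si1 /gg_near odd2t1; slia].
  have g1 : nth 0 (gg s) i1 = 2 by move: n1; rewrite gj; slia.
  have [_ Hn2 _] := gg_spec hi2.
  have : nth 0 (gg s) i1 != nth 0 (gg s) i2.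
    by apply: Hn2; [rewrite i2i1 hi1 | rewrite si1 si2 /gg_near odd2t2; slia].
  by rewrite g1 gi2.
Qed.

Lemma type01 b : 0 < b -> b <= size A -> (forall x, x \in s -> odd x -> x < nth 0 A b.-1) ->
  ~~ (has_type s b S2 || has_type s b S3) -> has_type s b S0 || has_type s b S1.
Proof.
move=> b0 bN Ho; have [T1 [T2 _]] := TY Hs b0 bN Ho.
rewrite /has_type; by case: (start_type s b) T1 T2.
Qed.

Lemma dir2 m' : p + t < m' -> exists p' t', p' + t' = m' /\
  (forall x, x \in s -> odd x -> x < 2 * t' + 1) /\ p' <= N_ 2 s /\
  ext_lt (mp 2 s p'.+1) (Fin (2 * t' + 1)) /\ ext_lt (Fin (2 * t' + 1)) (mp 2 s p') /\
  (ext_eqn (mp 2 s p') (2 * t' + 2) -> has_type s p' S2 || has_type s p' S3) /\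
  (ext_eqn (mp 2 s p'.+1) (2 * t') -> has_type s p'.+1 S0 || has_type s p'.+1 S1).
Proof.
move=> hm.
pose f u := find (fun a => a <= 2 * u + 1) A.
have fN u : f u <= size A by apply: find_size.
have flt u k : k < f u -> 2 * u + 1 < nth 0 A k.
  by move/(before_find 0) => /negbT; rewrite -ltnNge.
have fge u k : f u <= k -> k < size A -> nth 0 A k <= 2 * u + 1.
  move=> h1 h2; have hf : has (fun a => a <= 2 * u + 1) A.
    by rewrite has_find; apply: leq_ltn_trans h1 h2.
  have := nth_find 0 hf; have := Ale Hs h1 h2; rewrite -/(f u) => /= h3 h4.
  exact: leq_trans h3 h4.
have oddb x : x \in s -> odd x -> x <= 2 * t + 1 := H1max (x := x).
pose P u := (t < u) && (m' <= u + f u).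
have exP : exists u, P u by exists m'; rewrite /P; apply/andP; split; slia.
case: (ex_minnP exP) => u /andP [tu Pu] umin.
have gu : u + f u <= m'.
  case: (eqVneq u t.+1) => [eu | neu].
  - have : f u <= p.
      rewrite leqNgt; apply/negP => pf.
      have := flt u p pf; move: H3c; rewrite mp_fin //; last by have := fN u; slia.
      rewrite /= eu; slia.
    slia.
  - have nP : ~~ P u.-1.
      by apply/negP => /umin; slia.
    have tu1 : t < u.-1 by slia.
    move: nP; rewrite /P tu1 /= -ltnNge => h.
    have : f u <= f u.-1.
      rewrite leqNgt; apply/negP => ff.
      have := flt u _ ff; have := fge u.-1 (f u.-1) (leqnn _) (leq_trans ff (fN u)); slia.
    slia.
have eg : u + f u = m' by slia.
set q := f u in eg fN.
have hq := fN u; rewrite -/q in hq.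
case B: ((0 < q) && (nth 0 A q.-1 == 2 * u + 2) && ~~ (has_type s q S2 || has_type s q S3)).
- case/andP: B => /andP [q0 /eqP eq] nt.
  have hq2 : 0 < q.-1 -> 2 * u + 5 <= nth 0 A q.-2.
    move=> q1.
    have j1 : q.-2.+1 = q.-1 by slia.
    have [s1 s2] := Astep Hs (ltac:(rewrite j1; slia) : q.-2.+1 < size A).
    rewrite j1 eq in s1 s2.
    have ev : ~~ odd (nth 0 A q.-2).
      apply/negP => o; have := oddb _ (A_in (ltac:(slia) : q.-2 < size A)) o; slia.
    have := s2 ev; slia.
  exists q.-1, u.+1; split; first slia.
  split; first by move=> x xs ox; have := oddb _ xs ox; slia.
  split; first by rewrite /N_; slia.
  split; first by rewrite prednK // mp_fin //= eq; slia.
  split.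
    case: (posnP q.-1) => [->|q1] //; rewrite mp_fin //=; have := hq2 q1; slia.
  split.
    case: (posnP q.-1) => [->|q1] //; rewrite (mp_fin q1 (ltac:(slia) : q.-1 <= size A)) /= => /eqP e; have := hq2 q1; slia.
  rewrite prednK // => _; apply: type01 => //.
  move=> x xs ox; have := oddb _ xs ox; rewrite eq; slia.
- exists q, u; split; first slia.
  split; first by move=> x xs ox; have := oddb _ xs ox; slia.
  split=> //.
  split.
    case: (leqP q.+1 (size A)) => h; last by rewrite mp_big.
    rewrite mp_fin //=.
    have h1 := fge u q (leqnn _) h.
    case: (eqVneq (nth 0 A q) (2 * u + 1)) => e; last by slia.
    have := oddb _ (A_in h); rewrite e odd2t1 => /(_ isT); slia.
  split.
    case: (posnP q) => [->|q0] //; rewrite mp_fin //=; apply: flt; slia.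
  split.
    case: (posnP q) => [->|q0] //; rewrite mp_fin //= => e.
    by move: B; rewrite q0 e /= => /negbT; rewrite negbK.
  case: (leqP q.+1 (size A)) => h; last by rewrite mp_big.
  rewrite mp_fin //= => /eqP e.
  case: (eqVneq u t.+1) => [eu | neu].
  + apply: SL => //; first by rewrite /= e eu; slia.
    apply/eqP => qp; move: eg hm; rewrite eu -qp => eg hm; slia.
  + exfalso.
    have : q < f u.-1.
      rewrite ltnNge; apply/negP => ff; have := fge u.-1 q ff (ltac:(slia)); rewrite e; slia.
    move=> hh; have : P u.-1.
      by rewrite /P; apply/andP; split; slia.
    move/umin; slia.
Qed.

End E.

Theorem theorem5p8 (k r m m' : nat) (s : seq nat) :
  3 <= r -> r <= k -> inC_eq k r m s -> (inC_lt k r m' s <-> m < m').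
Proof.
move=> _ _ [p [t [pm [HC [[H1in H1max] [H2 [H3a [H3b [H3c [H4 [H5 H6]]]]]]]]]]].
have HC' := HC; case: HC' => /andP [Hs _] [Hodd1 _].
split.
- case=> p' [t' [e' [_ [L1 [L2a [L2b [L2c [L3 L4]]]]]]]].
  rewrite -pm -e'; apply: (dir1 Hs H1in H1max H2 H3a H3b H4) => //.
- move=> mm.
  have [p' [t' [e' [L1 [L2a [L2b [L2c [L3 L4]]]]]]]] :=
    @dir2 s p t Hs Hodd1 H1in H1max H2 H3a H5 H3c m' (ltac:(by rewrite pm)).
  exists p', t'; split=> //; split=> //; split=> //.
Qed.
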